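(* (Depth efficiency) Fix a leading degree $r\ge 2$. Let $\bm d_q=(d_0,\dots,d_{h_q})$ be a QRes architecture whose functional variety is filling, with leading functional variety $\mathcal{V}^2_{\bm d_q,r}$, and let $\bm d_n=(d_0',\dots,d_{h_n}')$ be a plain neural network architecture with leading functional variety $\mathcal{V}_{\bm d_n,r}$, where $h_n,h_q>1$, $d_0=d_0'$ and $d_{h_q}=d'_{h_n}$. If $\dim\mathcal{V}_{\bm d_n,r}\ge\dim\mathcal{V}^2_{\bm d_q,r}$, then $$h_n\ \ge\ 1+\Big(1+\frac{\log 2}{\log r}\Big)(h_q-1).$$
   Context: An architecture is a vector $\bm d=(d_0,\dots,d_h)$ of layer widths; $h$ is the depth, and layer $i$ maps $\mathbb{R}^{d_{i-1}}\to\mathbb{R}^{d_i}$. A plain neural-network layer is $x\mapsto\sigma(Wx+b)$; a QRes layer is $x\mapsto\sigma(W_2x\circ W_1x+W_1x+b)$, with trainable $W_1,W_2,b$, $\circ$ the Hadamard product, $\sigma$ applied entrywise. The functional space of an architecture is the image of the parameter-to-function map. Any activation is decomposed (e.g. by Taylor approximation) into polynomials; the highest degree $r$ appearing is its leading degree. The leading functional space is the subspace of the functional space consisting of homogeneous polynomials of highest degree; its Zariski closure is the leading functional variety, denoted $\mathcal{V}_{\bm d,r}$ (plain network, activation of leading degree $r$) or $\mathcal{V}^2_{\bm d,r}$ (QRes network). $\mathrm{Sym}_k(\mathbb{R}^n)$ denotes homogeneous degree-$k$ polynomials in $n$ real variables. A plain architecture $\bm d$ has a filling functional variety for degree $r$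 if $\mathcal{V}_{\bm d,r}=\mathrm{Sym}_{r^{h-1}}(\mathbb{R}^{d_0})^{d_h}$; a QRes architecture is filling for leading degree $r$ if its leading functional variety equals the full space of $d_h$-tuples of homogeneous polynomials of its leading degree, namely $\mathcal{V}^2_{\bm d,r}=\mathrm{Sym}_{(2r)^{h-1}}(\mathbb{R}^{d_0})^{d_h}$.
   Formalization: The input width $d_0$ (equal to $d_0'$) is at least 2, and every layer width of both architectures $\bm d_q$ and $\bm d_n$ is positive. Apart from conventions, each condition added here is assumed in the paper as well or is needed for the statement above to hold. *)

(* Defs.v *)
From Stdlib Require Import Reals.
From HB Require Import structures.
From mathcomp Require Import all_boot all_order all_algebra.
From mathcomp Require Import mpoly.
From mathcomp Require Import Rstruct.

Set Implicit Arguments.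
Unset Strict Implicit.
Unset Printing Implicit Defensive.

Import Order.TTheory GRing.Theory Num.Theory.
Local Open Scope ring_scope.

Notation Poly n := {mpoly R[n]}.

Section Net.
Variable n : nat.  (* number of input variables d_0 *)

Definition net_input : seq (Poly n) := [seq 'X_i | i <- enum 'I_n].

(* Affine layer, leading (homogeneous) part: x |-> W x,
   W given by its entries W i j (row i, column j); output width dout. *)
Definition lin_layer (W : nat -> nat -> R) (dout : nat) (v : seq (Poly n))
  : seq (Poly n) :=
  [seq \sum_(j < size v) W i j *: v`_j | i <- iota 0 dout].

(* Leading part of the activation: entrywise x |-> x^r. *)
Definition act (r : nat) (v : seq (Poly n)) : seq (Poly n) :=
  [seq p ^+ r | p <- v].

Definition hadamard (u v : seq (Poly n)) : seq (Poly n) :=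
  [seq x.1 * x.2 | x <- zip u v].

Fixpoint plain_rec (r : nat) (W : nat -> nat -> nat -> R) (l : nat)
  (ds : seq nat) (v : seq (Poly n)) : seq (Poly n) :=
  match ds with
  | [::] => v
  | [:: dl] => lin_layer (W l) dl v
  | dl :: ds' => plain_rec r W l.+1 ds' (act r (lin_layer (W l) dl v))
  end.

Fixpoint qres_rec (r : nat) (W1 W2 : nat -> nat -> nat -> R) (l : nat)
  (ds : seq nat) (v : seq (Poly n)) : seq (Poly n) :=
  match ds with
  | [::] => v
  | [:: dl] => lin_layer (W1 l) dl v
  | dl :: ds' => qres_rec r W1 W2 l.+1 ds'
                   (act r (hadamard (lin_layer (W2 l) dl v)
                                    (lin_layer (W1 l) dl v)))
  end.

(* Coordinates on tuples of polynomials: c = (output index, monomial). *)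
Definition coord (c : nat * 'X_{1..n}) (s : seq (Poly n)) : R :=
  (s`_(c.1))@_(c.2).

Definition polyfun k (cs : 'I_k -> nat * 'X_{1..n}) (P : {mpoly R[k]})
  (s : seq (Poly n)) : R :=
  P.@[fun i => coord (cs i) s].

Definition vanishes_on (S : seq (Poly n) -> Prop) k
  (cs : 'I_k -> nat * 'X_{1..n}) (P : {mpoly R[k]}) : Prop :=
  forall s, S s -> polyfun cs P s = 0.

Definition Sym_tuple (D m : nat) (s : seq (Poly n)) : Prop :=
  size s = m /\ all (fun p => p \is D.-homog) s.

Definition zariski_closure (D m : nat) (S : seq (Poly n) -> Prop)
  (s : seq (Poly n)) : Prop :=
  Sym_tuple D m s /\
  forall k cs (P : {mpoly R[k]}), vanishes_on S cs P -> polyfun cs P s = 0.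

Definition alg_indep (S : seq (Poly n) -> Prop) k
  (cs : 'I_k -> nat * 'X_{1..n}) : Prop :=
  forall P : {mpoly R[k]}, vanishes_on S cs P -> P = 0.

(* dim S = k : the transcendence degree of the coordinate ring of S, i.e.
   the largest number of algebraically independent coordinate functions. *)
Definition is_dim (S : seq (Poly n) -> Prop) (k : nat) : Prop :=
  (exists cs : 'I_k -> nat * 'X_{1..n}, alg_indep S cs) /\
  (forall k' (cs : 'I_k' -> nat * 'X_{1..n}), alg_indep S cs -> (k' <= k)%N).

End Net.

Unset Implicit Arguments.

Definition depth (d : seq nat) : nat := (size d).-1.

Definition plain_space (r : nat) (d : seq nat) (s : seq (Poly (head 0%N d)))
  : Prop :=
  exists W, s = plain_rec r W 1 (behead d) (net_input (head 0%N d)).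

Definition qres_space (r : nat) (d : seq nat) (s : seq (Poly (head 0%N d)))
  : Prop :=
  exists W1 W2, s = qres_rec r W1 W2 1 (behead d) (net_input (head 0%N d)).

Definition V_plain (r : nat) (d : seq nat) :=
  zariski_closure (r ^ (depth d).-1) (last 0%N d) (plain_space r d).

Definition V_qres (r : nat) (d : seq nat) :=
  zariski_closure ((2 * r) ^ (depth d).-1) (last 0%N d) (qres_space r d).

Definition qres_filling (r : nat) (d : seq nat) : Prop :=
  forall s, V_qres r d s <-> Sym_tuple ((2 * r) ^ (depth d).-1) (last 0%N d) s.

(* Main.v *)
Require Import Defs.
From Stdlib Require Import Reals.
From HB Require Import structures.
From mathcomp Require Import all_boot all_order all_algebra.
From mathcomp Require Import mpoly.
From mathcomp Require Import Rstruct.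
From mathcomp Require Import zify.
From Stdlib Require Import Lia Lra.

Import Order.TTheory GRing.Theory Num.Theory.
Section Helpers.
Local Open Scope ring_scope.
Lemma poly_zero_all (q : {poly R}) : (forall t, q.[t] = 0) -> q = 0.
Proof.
move=> h; apply: (@roots_geq_poly_eq0 _ q [seq i%:R | i <- iota 0 (size q)]).
- by apply/allP => x _; rewrite rootE h.
- rewrite map_inj_uniq ?iota_uniq //; by move=> a b /eqP; rewrite eqr_nat => /eqP.
- by rewrite size_map size_iota.
Qed.

Lemma mpoly_zero_all n (p : {mpoly R[n]}) : (forall v, p.@[v] = 0) -> p = 0.
Proof.
elim: n p => [|n IH] p h.
  have := h (fun _ => 0); rewrite {1}(nvar0_mpolyC p) mevalC => H0.
  by rewrite (nvar0_mpolyC p) H0.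
apply/mpolyP => m0; rewrite mcoeff0; apply/eqP; rewrite -[_ == 0]negbK -mcoeff_msupp.
apply/negP => Hm0.
set j := m0 ord0.
pose P : {mpoly R[n]} := \sum_(m <- msupp p | m ord0 == j)
   p@_m *: 'X_[[multinom m (lift ord0 i) | i < n]].
have HP : P = 0.
  apply: IH => w.
  pose Q : {poly R} := \sum_(m <- msupp p)
     (p@_m * \prod_(i < n) w i ^+ m (lift ord0 i)) *: 'X^(m ord0).
  have HQ : Q = 0.
    apply: poly_zero_all => t.
    pose v : 'I_n.+1 -> R := fun i => if unlift ord0 i is Some k then w k else t.
    rewrite -(h v) mevalE /Q horner_sum; apply: eq_bigr => m _.
    rewrite hornerZ hornerXn big_ord_recl /v unlift_none.
    under [X in _ = _ * (_ * X)]eq_bigr do rewrite liftK.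
    by rewrite -mulrA [X in _ * X]mulrC.
  have := congr1 (fun q : {poly R} => q`_j) HQ.
  rewrite coef0 /Q coef_sum => HQj.
  rewrite /P rmorph_sum -[RHS]HQj big_mkcond /=; apply: eq_bigr => m _.
  rewrite coefZ coefXn mevalZ mevalX eq_sym.
  case: eqP => _; last by rewrite mulr0.
  rewrite mulr1; congr (_ * _); apply: eq_bigr => i _; by rewrite mnmE.
have := congr1 (mcoeff [multinom m0 (lift ord0 i) | i < n]) HP.
rewrite mcoeff0 /P raddf_sum -big_filter (bigD1_seq m0) ?filter_uniq ?msupp_uniq ?mem_filter ?eqxx ?Hm0 //=.
rewrite mcoeffZ mcoeffX eqxx mulr1 big1_seq ?addr0.
  by move=> H; move: Hm0; rewrite mcoeff_msupp H eqxx.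
move=> m /andP[Hmm0]; rewrite mem_filter => /andP[/eqP Hj _].
rewrite mcoeffZ mcoeffX; case: eqP => [E|]; last by rewrite mulr0.
case/negP: Hmm0; apply/eqP/mnmP => k.
case: (unliftP ord0 k) => [i ->|->]; last by rewrite Hj.
by have := congr1 (fun mm : 'X_{1..n} => mm i) E; rewrite !mnmE.
Qed.

Definition suppB n D m : {set 'I_m * 'X_{1..n < D.+1}} :=
  [set t | mdeg (val t.2) == D].

Lemma dim_upper n D m (S : seq {mpoly R[n]} -> Prop) k :
  is_dim (zariski_closure D m S) k -> (k <= #|suppB n D m|)%N.
Proof.
case=> [[cs Hind] _].
have Xnz : forall j : 'I_k, ('X_j : {mpoly R[k]}) != 0.
  move=> j; apply/eqP => /(congr1 (mcoeff U_(j))).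
  by rewrite mcoeffXU eqxx mcoeff0 => /eqP; rewrite oner_eq0.
have Hin : forall j, ((cs j).1 < m)%N && (mdeg (cs j).2 == D).
  move=> j; apply/negPn/negP => Hbad.
  suff : ('X_j : {mpoly R[k]}) = 0 by apply/eqP; exact: Xnz.
  apply: Hind => s [[Hsize Hall] _]; rewrite /polyfun mevalXU /Defs.coord.
  case: (ltnP (cs j).1 m) => Hlt.
    have Hlt' : ((cs j).1 < size s)%N by rewrite Hsize.
    have Hs := allP Hall _ (mem_nth 0 Hlt').
    apply: (dhomog_nemf_coeff Hs).
    by move: Hbad; rewrite Hlt.
  by rewrite nth_default ?mcoeff0 // Hsize.
have Hinj : injective cs.
  move=> j1 j2 E; case: (eqVneq j1 j2) => // Hne.
  have : ('X_j1 - 'X_j2 : {mpoly R[k]}) = 0.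
    by apply: Hind => s _; rewrite /polyfun mevalB !mevalXU E subrr.
  move/(congr1 (mcoeff U_(j1))); have Hne' : (j2 == j1) = false by rewrite eq_sym (negbTE Hne).
  rewrite mcoeffB !mcoeffXU eqxx Hne'.
  by rewrite mcoeff0 subr0 => /eqP; rewrite oner_eq0.
have : (size [seq cs j | j <- enum 'I_k] <=
        size [seq ((val t.1 : nat), (val t.2 : 'X_{1..n})) | t <- enum (suppB n D m)])%N.
  apply: uniq_leq_size; first by rewrite map_inj_uniq ?enum_uniq.
  move=> x /mapP [j _ ->]; move: (Hin j); case: (cs j) => a b /andP [h1 h2] /=.
  have h2' : (mdeg b < D.+1)%N by rewrite (eqP h2).
  apply/mapP; exists (Ordinal h1, BMultinom h2'); last by [].
  by rewrite mem_enum inE /=.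
by rewrite size_map size_enum_ord size_map -cardE.
Qed.

Lemma dim_lower n D m (S : seq {mpoly R[n]} -> Prop) k :
  (forall s, Sym_tuple D m s -> S s) -> is_dim S k -> (#|suppB n D m| <= k)%N.
Proof.
move=> HS [_ Hmax].
pose e (i : 'I_#|suppB n D m|) : 'I_m * 'X_{1..n < D.+1} := enum_val i.
pose cs i := ((val (e i).1 : nat), (val (e i).2 : 'X_{1..n})).
apply: (Hmax _ cs) => P HP.
apply: mpoly_zero_all => x.
pose s := mkseq (fun a => \sum_(i < #|suppB n D m|)
   (if val (e i).1 == a then x i else 0) *: 'X_[val (e i).2]) m.
have Hs : Sym_tuple D m s.
  split; first by rewrite size_mkseq.
  apply/allP => p /mapP [a _ ->].
  apply: rpred_sum => i _; apply: rpredZ; rewrite dhomogX.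
  by have := enum_valP i; rewrite inE.
have := HP s (HS s Hs); rewrite /polyfun => <-; apply: meval_eq => i.
rewrite /Defs.coord /= nth_mkseq ?ltn_ord // raddf_sum (bigD1 i) //= eqxx.
rewrite mcoeffZ mcoeffX eqxx mulr1 big1 ?addr0 // => i' Hi'.
rewrite mcoeffZ mcoeffX.
case: ifP => H1; last by rewrite mul0r.
case: eqP => H2; last by rewrite mulr0.
have : e i' = e i.
  move: H1 H2; rewrite /e; case: (enum_val i') => a1 b1; case: (enum_val i) => a2 b2 /=.
  by move=> /eqP E1 E2; congr pair; apply: val_inj.
by move/enum_val_inj => E; rewrite E eqxx in Hi'.
Qed.

Lemma card_lt n Dn Dq m : (1 < n)%N -> (0 < m)%N -> (Dn < Dq)%N ->
  (#|suppB n Dn m| < #|suppB n Dq m|)%N.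
Proof.
move=> hn hm hD.
pose i0 : 'I_n := Ordinal (ltnW hn).
pose i1 : 'I_n := Ordinal hn.
pose e := (U_(i0) *+ (Dq - Dn))%MM.
have hb : forall b : 'X_{1..n < Dn.+1}, (mdeg (val b + e)%MM < Dq.+1)%N.
  move=> b; rewrite mdegD mdegMn mdeg1 mul1n; have := bmdeg b.
  move: (mdeg (val b)) => x hx; lia.
pose g (t : 'I_m * 'X_{1..n < Dn.+1}) : 'I_m * 'X_{1..n < Dq.+1} :=
  (t.1, BMultinom (hb t.2)).
have ginj : injective g.
  move=> [a1 b1] [a2 b2] /eqP; rewrite xpair_eqE => /andP[/eqP /= E1 /eqP E2].
  congr pair => //; apply: val_inj; apply: (@addIm _ e).
  exact: (congr1 val E2).
rewrite -(card_imset (suppB n Dn m) ginj); apply: proper_card; apply/properP; split.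
  apply/subsetP => y /imsetP [t]; rewrite inE => /eqP Ht ->.
  rewrite inE /= mdegD mdegMn mdeg1 mul1n Ht.
  by rewrite subnKC ?eqxx // ltnW.
have hw : (mdeg (U_(i1) *+ Dq)%MM < Dq.+1)%N by rewrite mdegMn mdeg1 mul1n.
exists (Ordinal hm, BMultinom hw); first by rewrite inE /= mdegMn mdeg1 mul1n eqxx.
apply/imsetP => [[t _ E]].
have := congr1 (fun y : 'I_m * 'X_{1..n < Dq.+1} => (val y.2 : 'X_{1..n}) i0) E.
rewrite /= mulmnE mnm1E mnmDE mulmnE mnm1E eqxx /=.
move=> H; lia.

Qed.
End Helpers.

Local Open Scope R_scope.
Lemma INR_expn x n : INR (x ^ n)%N = INR x ^ n.
Proof. by elim: n => [|n IH] //=; rewrite expnS -multE mult_INR IH. Qed.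

Lemma real_part (r a b : nat) : (2 <= r)%N -> ((2*r)^a <= r^b)%N ->
  INR b.+1 >= 1 + (1 + ln 2 / ln (INR r)) * (INR a.+1 - 1).
Proof.
move=> hr /ssrnat.leP HD.
have Hr : 1 < INR r by apply: (lt_INR 1); apply/ssrnat.ltP.
have Hr0 : 0 < INR r by lra.
have HL : 0 < ln (INR r) by rewrite -ln_1; apply: ln_increasing; lra.
have H2 : 0 < ln 2 by rewrite -ln_1; apply: ln_increasing; lra.
move/le_INR: HD; rewrite !INR_expn -multE mult_INR => HD.
have H0 : 0 < (INR 2 * INR r) ^ a by apply: pow_lt; simpl; lra.
have : ln ((INR 2 * INR r) ^ a) <= ln (INR r ^ b).
  case: (Rle_lt_or_eq_dec _ _ HD) => [Hlt|->]; last by right.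
  by left; apply: ln_increasing.
 rewrite !ln_pow //; last by simpl; lra.
rewrite ln_mult; [|simpl; lra|lra].
have -> : INR 2 = 2 by simpl; lra.
move=> Hk.
have Ha : INR a * ln 2 <= (INR b - INR a) * ln (INR r) by lra.
have Hb : INR a * ln 2 / ln (INR r) <= INR b - INR a.
  have HL' : 0 <= / ln (INR r) by apply: Rlt_le; apply: Rinv_0_lt_compat.
  have := Rmult_le_compat_r _ _ _ HL' Ha.
  have -> : (INR b - INR a) * ln (INR r) * / ln (INR r) = INR b - INR a by field; lra.
  done.
rewrite !S_INR.
have -> : (1 + ln 2 / ln (INR r)) * (INR a + 1 - 1) = INR a + INR a * ln 2 / ln (INR r) by field; lra.
lra.
Qed.

Theorem theorem1 (r : nat) (dq dn : seq nat) (kq kn : nat) :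
  (2 <= r)%N ->
  all (fun w => 0 < w)%N dq -> all (fun w => 0 < w)%N dn ->
  (2 <= head 0 dq)%N ->
  (1 < depth dq)%N -> (1 < depth dn)%N ->
  head 0%N dq = head 0%N dn ->
  last 0%N dq = last 0%N dn ->
  qres_filling r dq ->
  is_dim (V_qres r dq) kq ->
  is_dim (V_plain r dn) kn ->
  (kq <= kn)%N ->
  INR (depth dn) >= 1 + (1 + ln 2 / ln (INR r)) * (INR (depth dq) - 1).
Proof.
move=> hr hposq hposn hn0 hdq hdn hhead hlast hfill hdimq hdimn hk.
have Lq := @dim_lower _ _ _ _ _ (fun s H => proj2 (hfill s) H) hdimq.
have Ln := @dim_upper _ (r ^ (depth dn).-1)%N (last 0%N dn) (plain_space r dn) kn hdimn.
rewrite -hhead -hlast in Ln.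
have hm : (0 < last 0 dq)%N.
  clear -hposq hdq; move: hposq hdq; case: dq => [|a l] // hp _.
  by have := allP hp _ (mem_last a l).
have HD : ((2 * r) ^ (depth dq).-1 <= r ^ (depth dn).-1)%N.
  rewrite leqNgt; apply/negP => hlt.
  have := @card_lt _ _ _ _ hn0 hm hlt; lia.
have := @real_part _ _ _ hr HD.
by rewrite (prednK (ltnW hdn)) (prednK (ltnW hdq)).
Qed.
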